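(* Every tuple-independent probabilistic database has the finite moments property.
   Context: Fix a countably infinite universe $U$. Facts are expressions $R(u_1,\dots,u_{\mathrm{ar}(R)})$ with $R$ from a finite schema and $u_i\in U$; an instance is a finite set of facts, $|D|$ its number of facts. A probabilistic database (PDB) is a discrete probability space $(\mathbb D,P)$ with $\mathbb D$ a nonempty countable set of instances. A PDB has the finite moments property if $\sum_{D\in\mathbb D}|D|^kP(\{D\})<\infty$ for all $k\in\mathbb N_+$. A PDB $\mathcal I$ is tuple-independent if for all $k$ and all pairwise distinct facts $f_1,\dots,f_k$, $\Pr_{I\sim\mathcal I}(f_1\in I,\dots,f_k\in I)=\prod_i\Pr_{I\sim\mathcal I}(f_i\in I)$. *)

(* Defs.v *)
From HB Require Import structures.
From mathcomp Require Import all_boot all_order all_algebra.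
From mathcomp Require Import finmap.
From mathcomp Require Import all_classical all_reals.
From mathcomp Require Import ereal esum.

Set Implicit Arguments.
Unset Strict Implicit.
Unset Printing Implicit Defensive.

Import Order.TTheory GRing.Theory Num.Theory.
Local Open Scope classical_set_scope.
Local Open Scope ring_scope.
Local Open Scope fset_scope.

(* The universe U: a fixed countably infinite set, taken to be nat. *)
Definition universe := nat.

(* A (finite) schema: relation symbols form a finite type with an arity map.
   A fact R(u_1,...,u_ar(R)) is a relation symbol with an ar(R)-tuple over U. *)
Definition fact (Rel : finType) (ar : Rel -> nat) : Type :=
  {R : Rel & (ar R).-tuple universe}.

Definition instance (Rel : finType) (ar : Rel -> nat) : Type :=
  {fset (fact ar)}.

(* A probabilistic database: a discrete probability space on instances,
   given by its probability mass function p (the sample space DD is the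
   support of p, which is countable since the type of instances is countable).
   We require the sample space to be nonempty, which follows from total mass 1. *)
Record PDB (R : realType) (Rel : finType) (ar : Rel -> nat) := {
  pmass : instance ar -> R;
  pmass_ge0 : forall D, 0 <= pmass D;
  pmass_sum1 : (\esum_(D in [set: instance ar]) (pmass D)%:E = 1)%E
}.

Definition Pr (R : realType) (Rel : finType) (ar : Rel -> nat)
    (I : PDB R ar) (E : set (instance ar)) : \bar R :=
  (\esum_(D in E) (pmass I D)%:E)%E.

Definition tuple_independent (R : realType) (Rel : finType) (ar : Rel -> nat)
    (I : PDB R ar) : Prop :=
  forall (k : nat) (fs : k.-tuple (fact ar)), uniq fs ->
    Pr I [set D | forall f, f \in fs -> f \in D] =
    (\big[*%E/1%E]_(f <- fs) Pr I [set D | f \in D])%E.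

Definition finite_moments (R : realType) (Rel : finType) (ar : Rel -> nat)
    (I : PDB R ar) : Prop :=
  forall k : nat, (0 < k)%N ->
    (\esum_(D in [set: instance ar]) ((#|` D| ^ k)%:R * pmass I D)%:E < +oo)%E.

(* Main.v *)
Require Import Defs.
From mathcomp Require Import all_boot all_order all_algebra finmap.
From mathcomp Require Import all_classical all_reals ereal esum.
From mathcomp Require Import lra.
Set Implicit Arguments.
Unset Strict Implicit.
Import Order.TTheory GRing.Theory Num.Theory.
Local Open Scope classical_set_scope.
Local Open Scope ring_scope.

Definition Ee (R : realType) (T : choiceType) (g : T -> R) : \bar R :=
  (\esum_(x in [set: T]) (g x)%:E)%E.
Arguments Ee {R T}.
Definition Er (R : realType) (T : choiceType) (g : T -> R) : R := fine (Ee g).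
Arguments Er {R T}.

Lemma esum_ge_list (R : realType) (T : choiceType) (g : T -> R) (r : seq T) :
  uniq r -> (forall x, 0 <= g x) -> ((\sum_(x <- r) g x)%:E <= Ee g)%E.
Proof.
move=> ur g0; apply: esum_ge; exists [set` r]; first by split => //; exact: finite_seq.
by rewrite -fsbig_seq // sumEFin.
Qed.

Lemma esum_le_list (R : realType) (T : choiceType) (g : T -> R) (c : R) :
  (forall r, uniq r -> \sum_(x <- r) g x <= c) -> (Ee g <= c%:E)%E.
Proof.
move=> H; apply: ge_ereal_sup => _ [X [finX _] <-].
rewrite fsbig_finite // sumEFin lee_fin; apply: H; exact: fset_uniq.
Qed.

Lemma esum_gt_list (R : realType) (T : choiceType) (g : T -> R) (c : R) :
  (c%:E < Ee g)%E -> exists r, uniq r /\ c < \sum_(x <- r) g x.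
Proof.
move/ereal_sup_gt => [_ [X [finX _] <-]]; rewrite fsbig_finite // sumEFin lte_fin => h.
by exists (fset_set X); split => //; exact: fset_uniq.
Qed.

Definition bnd (R : realType) (T : choiceType) (p g : T -> R) :=
  exists2 c, 0 <= c & forall x, 0 <= g x <= c * p x.
Arguments bnd {R T}.

Section S.
Variables (R : realType) (T : choiceType) (p : T -> R).
Hypothesis p0 : forall x, 0 <= p x.
Hypothesis p1 : Ee p = 1%E.

Lemma sum_p_le1 r : uniq r -> \sum_(x <- r) p x <= 1.
Proof. by move=> ur; rewrite -lee_fin -p1; apply: esum_ge_list. Qed.

Lemma bnd_ge0 (g : T -> R) : bnd p g -> forall x, 0 <= g x.
Proof. by case=> c _ h x; case/andP: (h x). Qed.

Lemma bnd_le (g : T -> R) : bnd p g -> exists c, (Ee g <= c%:E)%E.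
Proof.
case=> c c0 h; exists c; apply: esum_le_list => r ur.
apply: (@le_trans _ _ (\sum_(x <- r) c * p x)).
  by apply: ler_sum => x _; case/andP: (h x).
by rewrite -mulr_sumr ler_piMr // sum_p_le1.
Qed.

Lemma bnd_fin (g : T -> R) : bnd p g -> Ee g = (Er g)%:E.
Proof.
move=> hb; rewrite /Er fineK // ge0_fin_numE; last first.
  by apply: esum_ge0 => x _; rewrite lee_fin (bnd_ge0 hb).
by case: (bnd_le hb) => c hc; apply: le_lt_trans hc _; exact: ltry.
Qed.



Lemma Er_ge0 (g : T -> R) : (forall x, 0 <= g x) -> 0 <= Er g.
Proof. by move=> g0; apply: fine_ge0; apply: esum_ge0 => x _; rewrite lee_fin. Qed.

Lemma Er_p : Er p = 1.
Proof. by rewrite /Er p1. Qed.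

Lemma Er_list_ge (g : T -> R) r : uniq r -> bnd p g -> \sum_(x <- r) g x <= Er g.
Proof.
move=> ur hb; rewrite -lee_fin -bnd_fin //; apply: esum_ge_list => //.
exact: bnd_ge0.
Qed.

Lemma Er_le (g h : T -> R) : bnd p h -> (forall x, 0 <= g x <= h x) -> Er g <= Er h.
Proof.
move=> hh hgh.
have hg : bnd p g.
  case: hh => c c0 hc; exists c => // x; case/andP: (hgh x) => -> /le_trans; apply.
  by case/andP: (hc x).
rewrite -lee_fin -!bnd_fin //; apply: le_esum => x _; rewrite lee_fin.
by case/andP: (hgh x).
Qed.

Lemma bnd_add (g h : T -> R) : bnd p g -> bnd p h -> bnd p (fun x => g x + h x).
Proof.
case=> c c0 hc [d d0 hd]; exists (c + d); first by rewrite addr_ge0.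
move=> x; case/andP: (hc x) => a1 a2; case/andP: (hd x) => b1 b2.
by rewrite addr_ge0 //= mulrDl lerD.
Qed.

Lemma bnd_scale c (g : T -> R) : 0 <= c -> bnd p g -> bnd p (fun x => c * g x).
Proof.
move=> c0 [d d0 hd]; exists (c * d); first by rewrite mulr_ge0.
move=> x; case/andP: (hd x) => a1 a2.
by rewrite mulr_ge0 //= -mulrA ler_wpM2l.
Qed.

Lemma Er_add (g h : T -> R) : bnd p g -> bnd p h -> Er (fun x => g x + h x) = Er g + Er h.
Proof.
move=> hg hh; apply: EFin_inj; rewrite -bnd_fin; last exact: bnd_add.
rewrite EFinD -!bnd_fin // /Ee.
rewrite (eq_esum (b := fun x => ((g x)%:E + (h x)%:E)%E)) //.
by apply: esumD => x _; rewrite lee_fin ?(bnd_ge0 hg) ?(bnd_ge0 hh).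
Qed.

Lemma Er_scale c (g : T -> R) : 0 <= c -> bnd p g -> Er (fun x => c * g x) = c * Er g.
Proof.
move=> c0 hg; have hcg := bnd_scale c0 hg.
apply/eqP; rewrite eq_le; apply/andP; split.
  rewrite -lee_fin -bnd_fin //; apply: esum_le_list => r ur.
  by rewrite -mulr_sumr ler_wpM2l // Er_list_ge.
case: (ltrgt0P c) c0 => [cpos _| //|-> _]; last first.
  by rewrite mul0r; apply: Er_ge0 => x; rewrite mul0r.
rewrite -ler_pdivlMl //.
rewrite -lee_fin -(bnd_fin hg); apply: esum_le_list => r ur.
rewrite ler_pdivlMl // mulr_sumr; exact: Er_list_ge.
Qed.

Lemma Er_sum (A : choiceType) (s : seq A) (G : A -> T -> R) :
  (forall i, bnd p (G i)) ->
  Er (fun x => \sum_(i <- s) G i x) = \sum_(i <- s) Er (G i).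
Proof.
move=> hG; apply: EFin_inj; rewrite -sumEFin.
have -> : (\sum_(i <- s) (Er (G i))%:E = \sum_(i <- s) Ee (G i))%E.
  by apply: eq_bigr => i _; rewrite -bnd_fin.
rewrite /Er /Ee.
rewrite (eq_esum (b := fun x => (\sum_(i <- s) (G i x)%:E)%E)); last first.
  by move=> x _; rewrite sumEFin.
rewrite esum_sum; last by move=> x i _ _; rewrite lee_fin (bnd_ge0 (hG i)).
rewrite fineK //.
rewrite (eq_bigr (fun i => (Er (G i))%:E)); first by rewrite sumEFin.
by move=> i _; rewrite -bnd_fin.
Qed.

End S.
Set Implicit Arguments.
Unset Strict Implicit.
Import Order.TTheory GRing.Theory Num.Theory.
Local Open Scope classical_set_scope.
Local Open Scope ring_scope.

Section P.
Variables (R : realType) (Rel : finType) (ar : Rel -> nat) (I : PDB R ar).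
Hypothesis indep : tuple_independent I.

Local Notation p := (pmass I).
Local Notation inst := (instance ar).
Local Notation fct := (fact ar).

Lemma p0 : forall D, 0 <= p D. Proof. exact: pmass_ge0. Qed.
Lemma p1 : Ee p = 1%E. Proof. exact: pmass_sum1. Qed.

Definition ind (t : seq fct) (D : inst) : R := (all (fun f => f \in D) t)%:R.
Definition Pt (t : seq fct) : R := Er (fun D => ind t D * p D).
Definition pf (f : fct) : R := Pt [:: f].

Lemma ind01 t D : 0 <= ind t D <= 1.
Proof. rewrite /ind; case: (all _ t) => /=; rewrite ?ler01 ?lexx //. Qed.

Lemma bnd_ind t : bnd p (fun D => ind t D * p D).
Proof.
exists 1 => // D; case/andP: (ind01 t D) => a b.
by rewrite mulr_ge0 ?p0 //= ler_wpM2r ?p0.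
Qed.

Lemma Pt_ge0 t : 0 <= Pt t.
Proof. by apply: Er_ge0 => D; rewrite mulr_ge0 ?p0 //; case/andP: (ind01 t D). Qed.

Lemma Pt_nil : Pt [::] = 1.
Proof.
rewrite /Pt (_ : (fun D => ind [::] D * p D) = p); first exact: (Er_p p1).
by apply: funext => D; rewrite /ind /= mul1r.
Qed.

Lemma Pr_all fs : Pr I [set D | forall f, f \in fs -> f \in D] = (Pt fs)%:E.
Proof.
rewrite /Pr esum_mkcond /Pt -(bnd_fin p0 p1 (bnd_ind fs)); apply: eq_esum => D _.
rewrite /ind; case: (boolP (all _ fs)) => h.
  by rewrite mem_set /= ?mul1r //; apply/allP.
rewrite memNset ?mul0r // => /= H; case/negP: h; apply/allP => f; exact: H.
Qed.

Lemma Pr_one f : Pr I [set D | f \in D] = (pf f)%:E.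
Proof.
rewrite /pf -Pr_all; congr Pr; apply/seteqP; split => D /=.
  by move=> h g; rewrite mem_seq1 => /eqP ->.
by apply; rewrite mem_seq1.
Qed.

Lemma Pt_uniq u : uniq u -> Pt u = \prod_(f <- u) pf f.
Proof.
move=> uu; have := @indep (size u) (in_tuple u) uu; rewrite Pr_all.
rewrite (eq_bigr (fun f => (pf f)%:E)); last by move=> f _; rewrite Pr_one.
by rewrite prodEFin => -[].
Qed.

Lemma Pt_undup t : Pt t = Pt (undup t).
Proof. by rewrite /Pt /ind; congr Er; apply: funext => D; rewrite all_undup. Qed.

Lemma Pt_cons f t : Pt (f :: t) = (if f \in t then 1 else pf f) * Pt t.
Proof.
case: ifP => ft.
  rewrite mul1r /Pt /ind; congr Er; apply: funext => D /=.
  by rewrite andb_idl // => /allP/(_ f ft).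
rewrite Pt_undup /= ft Pt_uniq /=; last by rewrite mem_undup ft undup_uniq.
by rewrite big_cons -Pt_uniq ?undup_uniq // -Pt_undup.
Qed.


Lemma sum_count (s : seq fct) (P : pred fct) :
  \sum_(f <- s) (P f)%:R = (count P s)%:R :> R.
Proof.
elim: s => [|f s IH]; first by rewrite big_nil.
by rewrite big_cons IH /= natrD.
Qed.

Lemma count_le (s t : seq fct) : uniq s -> (count (fun f => f \in t) s <= size t)%N.
Proof.
move=> us; rewrite -size_filter; apply: uniq_leq_size; first exact: filter_uniq.
by move=> x; rewrite mem_filter => /andP[].
Qed.

Definition X (s : seq fct) (D : inst) : R := (count (fun f => f \in D) s)%:R.
Definition G s k t D := ind t D * X s D ^+ k * p D.
Definition F s k t := Er (G s k t).
Definition Ssum (s : seq fct) := \sum_(f <- s) pf f.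

Lemma X_ge0 s D : 0 <= X s D. Proof. exact: ler0n. Qed.
Lemma X_le s D : X s D <= (size s)%:R. Proof. by rewrite ler_nat count_size. Qed.

Lemma bnd_G s k t : bnd p (G s k t).
Proof.
exists ((size s)%:R ^+ k); first exact: exprn_ge0.
move=> D; rewrite /G; case/andP: (ind01 t D) => a b.
rewrite !mulr_ge0 ?exprn_ge0 ?X_ge0 ?p0 //= ler_wpM2r ?p0 //.
rewrite -[X in _ <= X]mul1r ler_pM ?exprn_ge0 ?X_ge0 //.
by rewrite lerXn2r ?nnegrE ?X_ge0 ?X_le.
Qed.

Lemma F0 s t : F s 0 t = Pt t.
Proof. by rewrite /F /Pt; congr Er; apply: funext => D; rewrite /G expr0 mulr1. Qed.

Lemma FS s k t : F s k.+1 t = \sum_(f <- s) F s k (f :: t).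
Proof.
rewrite /F -(Er_sum p0 p1); last by move=> f; exact: bnd_G.
congr Er; apply: funext => D.
rewrite /G exprS /X -sum_count mulr_suml mulr_sumr mulr_suml.
apply: eq_bigr => f _; rewrite /ind /= -mulnb natrM /=.
by rewrite [in LHS]mulrCA !mulrA.
Qed.

Lemma pf_ge0 f : 0 <= pf f. Proof. exact: Pt_ge0. Qed.
Lemma S_ge0 s : 0 <= Ssum s. Proof. by apply: sumr_ge0 => f _; exact: pf_ge0. Qed.

Lemma main_bound s k t : uniq s ->
  F s k t <= \prod_(j < k) ((size t + j)%:R + Ssum s) * Pt t.
Proof.
move=> us; elim: k t => [|k IH] t; first by rewrite F0 big_ord0 mul1r.
rewrite FS; apply: le_trans (ler_sum _ (fun f _ => IH (f :: t))) _.
set c := \prod_(j < k) (((size t).+1 + j)%:R + Ssum s).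
rewrite (eq_bigr (fun f => c * ((if f \in t then 1 else pf f) * Pt t))); last first.
  by move=> f _; rewrite Pt_cons; reflexivity.
rewrite -mulr_sumr -mulr_suml big_ord_recl /=.
rewrite (_ : \prod_(i < k) _ = c); last first.
  by apply: eq_bigr => j _; rewrite /bump /= add1n addnS addSn.
have c0 : 0 <= c by apply: prodr_ge0 => j _; rewrite addr_ge0 ?S_ge0.
rewrite mulrA [_ * c]mulrC ler_wpM2r ?Pt_ge0 // ler_wpM2l // addn0.
apply: (@le_trans _ _ (\sum_(f <- s) ((f \in t)%:R + pf f))).
  apply: ler_sum => f _; case: ifP => _ /=; first by rewrite lerDl pf_ge0.
  by rewrite add0r.
by rewrite big_split /= sum_count lerD2r ler_nat count_le.
Qed.


Lemma bnd_indp (h : inst -> bool) : bnd p (fun D => (h D)%:R * p D).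
Proof.
exists 1 => // D; case: (h D) => /=; rewrite ?mul1r ?mul0r ?p0 ?lexx ?mulr_ge0 ?p0 //.
Qed.

Lemma bnd_pp : bnd p p.
Proof. by exists 1 => // D; rewrite mul1r lexx p0. Qed.

Lemma F1 s : F s 1 [::] = Ssum s.
Proof. by rewrite FS; apply: eq_bigr => f _; rewrite F0. Qed.

Lemma F2 s : uniq s -> F s 2 [::] <= Ssum s * (1 + Ssum s).
Proof.
move=> us; have := main_bound 2 [::] us; rewrite Pt_nil mulr1.
rewrite !big_ord_recl big_ord0 /=.
by rewrite /bump /= add0r mulr1 addrC.
Qed.

Lemma X_card s D : uniq s -> X s D <= (#|` D|)%:R.
Proof.
move=> us; rewrite ler_nat -size_filter; apply: uniq_leq_size; first exact: filter_uniq.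
by move=> x; rewrite mem_filter => /andP[].
Qed.

Definition Q s := Er (fun D => ((2 * X s D < Ssum s)%R)%:R * p D).

Lemma cheb s : uniq s -> Ssum s ^+ 2 * Q s <= 4 * Ssum s.
Proof.
move=> us.
pose a := fun D => (Ssum s ^+ 2 / 4) * (((2 * X s D < Ssum s)%R)%:R * p D) + (2 * Ssum s) * G s 1 [::] D.
pose b := fun D => G s 2 [::] D + Ssum s ^+ 2 * p D.
have S0 := S_ge0 s.
have hbb : bnd p b by apply: bnd_add; [exact: bnd_G | apply: bnd_scale; [exact: sqr_ge0 | exact: bnd_pp]].
have hab : Er a <= Er b.
  apply: (Er_le p0 p1 hbb) => D; rewrite /a /b /G /ind /= !mul1r expr1.
  have X0 := X_ge0 s D; have pD := p0 D.
  apply/andP; split.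
    by rewrite addr_ge0 // mulr_ge0 // ?mulr_ge0 // ?divr_ge0 // ?sqr_ge0 // ?mulr_ge0 // ?X0 //; case: (_ < _).
  rewrite mulrA -mulrDl mulrA -mulrDl ler_wpM2r //.
  case: ltP => h /=; first nra.
  rewrite mulr0 add0r; have := sqr_ge0 (X s D - Ssum s); nra.
have eb : Er b = F s 2 [::] + Ssum s ^+ 2.
  rewrite /b (Er_add p0 p1) //; [|exact: bnd_G|apply: bnd_scale; [exact: sqr_ge0 | exact: bnd_pp]].
  by rewrite (Er_scale p0 p1) ?(Er_p p1) ?mulr1 //; [exact: sqr_ge0|exact: bnd_pp].
have ea : Er a = Ssum s ^+ 2 / 4 * Q s + 2 * Ssum s * Ssum s.
  rewrite /a (Er_add p0 p1) //; [|apply: bnd_scale; [|exact: bnd_indp]|apply: bnd_scale; [|exact: bnd_G]]; last 2 first.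
  - by rewrite divr_ge0 ?sqr_ge0.
  - by rewrite mulr_ge0.
  rewrite (Er_scale p0 p1) ?(Er_scale p0 p1) //; [|by rewrite mulr_ge0|exact: bnd_G|by rewrite divr_ge0 ?sqr_ge0|exact: bnd_indp].
  by rewrite -/(F s 1 [::]) F1.
move: hab; rewrite ea eb; have := F2 us; nra.
Qed.


Lemma S_bounded : exists M, forall s, uniq s -> Ssum s <= M.
Proof.
have : ((1/2 : R)%:E < Ee p)%E by rewrite p1 lte_fin; lra.
case/esum_gt_list => r [ur hr].
pose N := (\sum_(D <- r) #|` D|).+1.
exists (2 * N%:R + 8) => s us.
have S0 := S_ge0 s.
case: (lerP (Ssum s) (2 * N%:R)) => h; first by have := ler0n R N; lra.
have hQ : 1/2 < Q s.
  apply: (lt_le_trans hr).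
  apply: (@le_trans _ _ (Er (fun D : inst => ((#|` D| < N)%N)%:R * p D))).
    rewrite (eq_big_seq (fun D : inst => ((#|` D| < N)%N)%:R * p D)); first exact: (Er_list_ge p0 p1 ur (bnd_indp _)).
    move=> D Dr; rewrite ltnS (bigD1_seq D) //= leq_addr mul1r //.
  apply: (Er_le p0 p1 (bnd_indp _)) => D.
  have pD := p0 D.
  case: ltnP => hD /=; last by rewrite mul0r lexx; case: (_ < _)%R; rewrite /= ?mul1r ?mul0r.
  rewrite mul1r pD /=.
  have : X s D < Ssum s / 2.
    apply: (le_lt_trans (X_card D us)); apply: (lt_le_trans (y := N%:R)); first by rewrite ltr_nat.
    lra.
  move=> hX; have -> : (2 * X s D < Ssum s)%R by lra.
  by rewrite mul1r.
have N0 := ler0n R N.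
have hS : 0 < Ssum s by lra.
have h2 : Ssum s ^+ 2 * (1/2) < Ssum s ^+ 2 * Q s by rewrite ltr_pM2l // exprn_gt0.
have := cheb us; nra.
Qed.


Lemma moments k : (Ee (fun D : inst => ((#|` D| ^ k)%:R * p D)%R) < +oo)%E.
Proof.
case: S_bounded => M hM.
apply: (le_lt_trans (esum_le_list (c := (k%:R + M) ^+ k) _)); last exact: ltry.
move=> r ur.
pose s := undup (flatten [seq enum_fset D | D : inst <- r]).
have us : uniq s := undup_uniq _.
have hX : forall D, D \in r -> X s D = (#|` D|)%:R.
  move=> D Dr; apply/eqP; rewrite eq_le X_card //= ler_nat -size_filter.
  apply: uniq_leq_size; first exact: fset_uniq.
  move=> x xD; rewrite mem_filter xD /= mem_undup; apply/flatten_mapP; by exists D.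
rewrite (eq_big_seq (G s k [::])); last by move=> D Dr; rewrite /G hX // natrX /ind /= mul1r.
apply: le_trans (Er_list_ge p0 p1 ur (bnd_G _ _ _)) _.
apply: le_trans (main_bound k [::] us) _.
rewrite Pt_nil mulr1.
have -> : (k%:R + M) ^+ k = \prod_(j < k) (k%:R + M) by rewrite -(big_mkord xpredT (fun _ => k%:R + M)) prodr_const_nat subn0.
apply: ler_prod => j _; apply/andP; split; first by rewrite addr_ge0 ?S_ge0.
by rewrite lerD ?hM // ler_nat add0n ltnW.
Qed.

End P.

Unset Implicit Arguments.

Theorem proposition3p3 (R : realType) (Rel : finType) (ar : Rel -> nat)
  (I : PDB R ar) :
  tuple_independent I -> finite_moments I.
Proof. by move=> indep k _; exact: (moments indep k). Qed.
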